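(* Let $\mathcal R$ be a DCTRS and $R=(l\to r\Leftarrow s_1\twoheadrightarrow t_1,\dots,s_n\twoheadrightarrow t_n)\in\mathcal R$ a rule such that, for some $i\in\{1,\dots,n\}$, $s_i$ and $t_i$ are constructor terms having a most general unifier $\theta$. Let $R'=(l\theta\to r\theta\Leftarrow s_1\theta\twoheadrightarrow t_1\theta,\dots,s_{i-1}\theta\twoheadrightarrow t_{i-1}\theta,\,s_{i+1}\theta\twoheadrightarrow t_{i+1}\theta,\dots,s_n\theta\twoheadrightarrow t_n\theta)$ and $\mathcal R'=(\mathcal R\setminus\{R\})\cup\{R'\}$. Then $\mathcal R'$ is a DCTRS and for all ground terms $s,t$: $s\xrightarrow{\mathsf i}{}^{*}_{\mathcal R}t$ if and only if $s\xrightarrow{\mathsf i}{}^{*}_{\mathcal R'}t$.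
   Context: Terms $\mathcal T(\mathcal F,\mathcal V)$; $\mathrm{Var}(\cdot)$ variables; $t|_p$ subterm, $t[u]_p$ replacement. A DCTRS is a finite set of conditional rules $l\to r\Leftarrow s_1\twoheadrightarrow t_1,\dots,s_n\twoheadrightarrow t_n$ ($l\notin\mathcal V$) with $\mathrm{Var}(r)\subseteq\mathrm{Var}(l,s_1,\dots,s_n,t_1,\dots,t_n)$ and $\mathrm{Var}(s_i)\subseteq\mathrm{Var}(l,t_1,\dots,t_{i-1})$ for all $i$. Defined symbols $\mathcal D_{\mathcal R}$ are the root symbols of left-hand sides; constructors are the remaining symbols; constructor terms are terms built from constructors and variables. Innermost rewriting on ground terms w.r.t. a DCTRS $\mathcal S$ (least relation): $s\xrightarrow{\mathsf i}_{\mathcal S}t$ iff there are a position $p$ of $s$ such that no proper subterm of $s|_p$ is reducible, a rule $l\to r\Leftarrow s_1\twoheadrightarrow t_1,\dots,s_n\twoheadrightarrow t_n\in\mathcal S$ and a normalized ground substitution $\sigma$ (every $x\sigma$ irreducible) with $s|_p=l\sigma$, $s_i\sigma\xrightarrow{\mathsf i}{}^{*}_{\mathcal S}t_i\sigma$ for all $i$, and $t=s[r\sigma]_p$. *)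

(* Defs.v *)
From Stdlib Require Import List Relations.
Import ListNotations.
Set Implicit Arguments.

Section TRS.
Variables F V : Type.

Inductive term : Type :=
| Var : V -> term
| Fun : F -> list term -> term.

Fixpoint vars (t : term) : list V :=
  match t with
  | Var x => [x]
  | Fun _ ts => (fix go (l : list term) : list V :=
                   match l with [] => [] | u :: l' => vars u ++ go l' end) ts
  end.

Fixpoint funs (t : term) : list F :=
  match t with
  | Var _ => []
  | Fun f ts => f :: (fix go (l : list term) : list F :=
                   match l with [] => [] | u :: l' => funs u ++ go l' end) ts
  end.

Definition ground (t : term) : Prop := vars t = [].

Definition subst := V -> term.

Fixpoint apply (s : subst) (t : term) : term :=
  match t with
  | Var x => s x
  | Fun f ts => Fun f (map (apply s) ts)
  end.

Definition pos := list nat.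

Fixpoint subterm_at (t : term) (p : pos) : option term :=
  match p with
  | [] => Some t
  | i :: p' =>
      match t with
      | Var _ => None
      | Fun _ ts => match nth_error ts i with
                    | Some u => subterm_at u p'
                    | None => None
                    end
      end
  end.

Fixpoint replace_at (t : term) (p : pos) (u : term) : option term :=
  match p with
  | [] => Some u
  | i :: p' =>
      match t with
      | Var _ => None
      | Fun f ts => match nth_error ts i with
                    | Some ti => match replace_at ti p' u with
                                 | Some ti' => Some (Fun f (firstn i ts ++ ti' :: skipn (S i) ts))
                                 | None => None
                                 end
                    | None => None
                    end
      end
  end.

(* conditional rules  l -> r <= s1 ->> t1, ..., sn ->> tn *)
Record rule : Type := mkRule {
  lhs : term;
  rhs : term;
  conds : list (term * term)
}.

Definition trs := rule -> Prop.

Definition finite_trs (S : trs) : Prop :=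
  exists l : list rule, forall rho, S rho <-> In rho l.

Definition is_var (t : term) : Prop := exists x, t = Var x.

Definition cond_vars (c : list (term * term)) : list V :=
  flat_map (fun st => vars (fst st) ++ vars (snd st)) c.

Definition dctrs_rule (rho : rule) : Prop :=
  ~ is_var (lhs rho) /\
  (forall x, In x (vars (rhs rho)) ->
     In x (vars (lhs rho) ++ cond_vars (conds rho))) /\
  (forall i si ti, nth_error (conds rho) i = Some (si, ti) ->
     forall x, In x (vars si) ->
       In x (vars (lhs rho) ++ flat_map (fun st => vars (snd st)) (firstn i (conds rho)))).

Definition dctrs (S : trs) : Prop :=
  finite_trs S /\ forall rho, S rho -> dctrs_rule rho.

Definition defined (S : trs) (f : F) : Prop :=
  exists rho ts, S rho /\ lhs rho = Fun f ts.

Definition constructor_term (S : trs) (t : term) : Prop :=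
  forall f, In f (funs t) -> ~ defined S f.

Definition unifier (th : subst) (u v : term) : Prop := apply th u = apply th v.

Definition mgu (th : subst) (u v : term) : Prop :=
  unifier th u v /\
  forall sg, unifier sg u v -> exists d : subst, forall x, sg x = apply d (th x).

(* instantiating a rule by th and deleting its i-th condition (0-based) *)
Definition inst_rule_del (th : subst) (rho : rule) (i : nat) : rule :=
  mkRule (apply th (lhs rho)) (apply th (rhs rho))
    (map (fun st => (apply th (fst st), apply th (snd st)))
         (firstn i (conds rho) ++ skipn (S i) (conds rho))).

(* one step of the defining operator of innermost rewriting, relative
   to a candidate relation X (used for reducibility and for conditions) *)
Definition reducible (X : relation term) (u : term) : Prop := exists w, X u w.

Definition innermost_step (S : trs) (X : relation term) (s t : term) : Prop :=
  ground s /\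
  exists (p : pos) (rho : rule) (sg : subst),
    S rho /\
    (forall x, ground (sg x) /\ ~ reducible X (sg x)) /\
    subterm_at s p = Some (apply sg (lhs rho)) /\
    (forall q u, q <> [] -> subterm_at (apply sg (lhs rho)) q = Some u ->
                 ~ reducible X u) /\
    (forall si ti, In (si, ti) (conds rho) ->
        clos_refl_trans term X (apply sg si) (apply sg ti)) /\
    replace_at s p (apply sg (rhs rho)) = Some t.

Definition is_fix (S : trs) (X : relation term) : Prop :=
  forall s t, X s t <-> innermost_step S X s t.

Definition innermost_rel (S : trs) (X : relation term) : Prop :=
  is_fix S X /\ forall Y, is_fix S Y -> forall s t, X s t -> Y s t.

End TRS.

(* Main.v *)
Require Import Defs.
From Stdlib Require Import List Relations Classical ClassicalEpsilon Lia Arith.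
Import ListNotations.
Set Implicit Arguments.

Section Basics.
Variables F V : Type.
Notation term := (term F V).

Lemma term_ind' (P : term -> Prop) :
  (forall x, P (Var F x)) -> (forall f ts, Forall P ts -> P (Fun f ts)) -> forall t, P t.
Proof.
  intros HV HF. fix IH 1. intros [x|f ts]. apply HV. apply HF.
  induction ts as [|u ts IHts]. constructor. constructor. apply IH. apply IHts.
Qed.

Lemma vars_Fun f ts : vars (Fun f ts) = flat_map (@vars F V) ts.
Proof. induction ts; simpl in *; auto. Qed.

Lemma funs_Fun f ts : funs (Fun f ts) = f :: flat_map (@funs F V) ts.
Proof. induction ts; simpl in *; auto. Qed.

Lemma vars_apply (d : subst F V) t x :
  In x (vars (apply d t)) <-> exists y, In y (vars t) /\ In x (vars (d y)).
Proof.
  induction t using term_ind'; [simpl|cbn [apply]].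
  - split. intros; exists x0; auto. intros [y [[<-|[]] H]]; auto.
  - rewrite !vars_Fun, !in_flat_map. split.
    + intros [u [Hu Hx]]. apply in_map_iff in Hu as [c [<- Hc]].
      rewrite Forall_forall in H. apply H in Hx as [y [Hy Hy']]; auto.
      exists y; split; auto. rewrite in_flat_map. eauto.
    + intros [y [Hy Hx]]. rewrite in_flat_map in Hy. destruct Hy as [c [Hc Hy]].
      exists (apply d c). split. apply in_map; auto.
      rewrite Forall_forall in H. apply H; eauto.
Qed.

Lemma ground_iff (t : term) : ground t <-> forall x, ~ In x (vars t).
Proof.
  unfold ground. split. intros -> x []. destruct (vars t) as [|y l]; auto.
  intros H. exfalso. apply (H y). left; auto.
Qed.

Lemma ground_apply (d : subst F V) t : (forall x, ground (d x)) -> ground (apply d t).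
Proof.
  intros H. apply ground_iff. intros x Hx. apply vars_apply in Hx as [y [_ Hy]].
  apply ground_iff in Hy; auto.
Qed.

Lemma ground_apply_inv (d : subst F V) t y : ground (apply d t) -> In y (vars t) -> ground (d y).
Proof.
  intros H Hy. apply ground_iff. intros x Hx. apply ground_iff with (x:=x) in H. apply H.
  apply vars_apply. eauto.
Qed.

Lemma apply_comp (d th : subst F V) t :
  apply d (apply th t) = apply (fun x => apply d (th x)) t.
Proof.
  induction t using term_ind'; simpl; auto. f_equal. rewrite map_map.
  apply map_ext_in. intros. rewrite Forall_forall in H. auto.
Qed.

Lemma apply_ext (s1 s2 : subst F V) t :
  (forall x, In x (vars t) -> s1 x = s2 x) -> apply s1 t = apply s2 t.
Proof.
  induction t using term_ind'; cbn [apply]; intros Hx.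
  - apply Hx. left; auto.
  - f_equal. apply map_ext_in. intros c Hc. rewrite Forall_forall in H. apply H; auto.
    intros y Hy. apply Hx. rewrite vars_Fun, in_flat_map. eauto.
Qed.

Lemma funs_apply (d : subst F V) t f : In f (funs t) -> In f (funs (apply d t)).
Proof.
  induction t using term_ind'; [simpl|cbn [apply]]. intros [].
  rewrite !funs_Fun. intros [->|Hf]. left; auto. right.
  rewrite in_flat_map in *. destruct Hf as [c [Hc Hf]]. exists (apply d c).
  split. apply in_map; auto. rewrite Forall_forall in H. auto.
Qed.

Lemma subterm_app (u v : term) q p :
  subterm_at u q = Some v -> subterm_at u (q ++ p) = subterm_at v p.
Proof.
  revert u. induction q as [|j q IH]; simpl; intros u H. congruence.
  destruct u; try discriminate. destruct (nth_error l j); try discriminate. auto.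
Qed.

Lemma replace_def (u v z : term) p :
  subterm_at u p = Some v -> exists w, replace_at u p z = Some w.
Proof.
  revert u. induction p as [|j p IH]; simpl; intros u H. eauto.
  destruct u; try discriminate. destruct (nth_error l j); try discriminate.
  destruct (IH _ H) as [w ->]. eauto.
Qed.

Lemma subterm_apply (d : subst F V) t u p :
  subterm_at t p = Some u -> subterm_at (apply d t) p = Some (apply d u).
Proof.
  revert t. induction p as [|j p IH]; simpl; intros t H. congruence.
  destruct t; try discriminate. simpl. rewrite nth_error_map.
  destruct (nth_error l j); try discriminate. simpl. auto.
Qed.

Lemma var_pos (t : term) y : In y (vars t) -> exists p, subterm_at t p = Some (Var F y).
Proof.
  induction t using term_ind'; [simpl|].
  - intros [<-|[]]. exists []; auto.
  - rewrite vars_Fun, in_flat_map. intros [c [Hc Hy]].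
    destruct (In_nth_error _ _ Hc) as [j Hj].
    rewrite Forall_forall in H. destruct (H c Hc Hy) as [p Hp].
    exists (j :: p). simpl. rewrite Hj. auto.
Qed.

End Basics.

Section Sem.
Variables F V : Type.
Notation term := (term F V).

Lemma red_transfer (S : trs F V) X (v : term) p r (sg : subst F V) :
  is_fix S X -> ground v -> S r -> (forall x, ground (sg x) /\ ~ reducible X (sg x)) ->
  subterm_at v p = Some (apply sg (lhs r)) ->
  (forall q u, q <> [] -> subterm_at (apply sg (lhs r)) q = Some u -> ~ reducible X u) ->
  (forall a b, In (a, b) (conds r) -> clos_refl_trans term X (apply sg a) (apply sg b)) ->
  reducible X v.
Proof.
  intros Hfix Hg HS Hsg Hp Hq Hc.
  destruct (replace_def _ (apply sg (rhs r)) _ Hp) as [w Hw].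
  exists w. apply Hfix. split; auto. exists p, r, sg. repeat split; auto.
  apply Hsg. apply Hsg.
Qed.

Lemma red_up (S : trs F V) X (u v : term) q :
  is_fix S X -> subterm_at u q = Some v -> ground u -> reducible X v -> reducible X u.
Proof.
  intros Hfix Hq Hg [w Hw]. apply Hfix in Hw.
  destruct Hw as [_ [p [r [sg [HS [Hsg [Hp [Hpq [Hc _]]]]]]]]].
  apply red_transfer with (S:=S) (p:=q ++ p) (r:=r) (sg:=sg); auto.
  rewrite (subterm_app _ _ p Hq). auto.
Qed.

Lemma irred_constr (S : trs F V) X (d : subst F V) c :
  is_fix S X -> (forall r, S r -> ~ is_var (lhs r)) ->
  (forall f, In f (funs c) -> ~ defined S f) ->
  (forall y, ground (d y) /\ ~ reducible X (d y)) ->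
  ~ reducible X (apply d c).
Proof.
  intros Hfix Hlhs. induction c as [x|f cs IH] using term_ind'; intros Hc Hd.
  - apply Hd.
  - intros [w Hw]. apply Hfix in Hw.
    destruct Hw as [_ [p [r [sg [HS [Hsg [Hp [Hpq [Hcd _]]]]]]]]].
    destruct p as [|j p].
    + simpl in Hp. injection Hp as Hp.
      destruct (lhs r) as [x|g us] eqn:El.
      * apply (Hlhs r HS). exists x; auto.
      * simpl in Hp. injection Hp as <- _. apply (Hc f). rewrite funs_Fun; left; auto.
        exists r, us; auto.
    + cbn [apply subterm_at] in Hp. rewrite nth_error_map in Hp.
      destruct (nth_error cs j) as [cj|] eqn:Ej; try discriminate. simpl in Hp.
      rewrite Forall_forall in IH. apply (IH cj (nth_error_In _ _ Ej)); auto.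
      * intros f' Hf'. apply Hc. rewrite funs_Fun. right. apply in_flat_map.
        exists cj; split; auto. apply (nth_error_In _ _ Ej).
      * apply red_transfer with (S:=S) (p:=p) (r:=r) (sg:=sg); auto. apply ground_apply. apply Hd.
Qed.

Lemma rt_irred X (a b : term) : clos_refl_trans term X a b -> ~ reducible X a -> a = b.
Proof.
  intros H. apply clos_rt_rt1n in H. destruct H; auto.
  intros Hn. exfalso. apply Hn. exists y; auto.
Qed.

End Sem.

Section Kappa.
Variables F V : Type.
Notation term := (term F V).
Variable P : F -> Prop.
Variable x0 : V.

Definition isdef (f : F) : bool := if excluded_middle_informative (P f) then true else false.

Fixpoint kappa (t : term) : term :=
  match t with
  | Var _ x => Var F x
  | Fun f ts => if isdef f then Var F x0 else Fun f (map kappa ts)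
  end.

Lemma kappa_funs t f : In f (funs (kappa t)) -> ~ P f.
Proof.
  induction t using term_ind'; simpl. intros [].
  unfold isdef. destruct (excluded_middle_informative (P f0)). intros [].
  rewrite funs_Fun. intros [<-|Hf]; auto.
  rewrite in_flat_map in Hf. destruct Hf as [u [Hu Hf]].
  apply in_map_iff in Hu as [c [<- Hc]]. rewrite Forall_forall in H. eauto.
Qed.

Lemma kappa_apply (th : subst F V) c : (forall f, In f (funs c) -> ~ P f) ->
  kappa (apply th c) = apply (fun z => kappa (th z)) c.
Proof.
  induction c using term_ind'; intros Hc; simpl; auto.
  unfold isdef. destruct (excluded_middle_informative (P f)) as [Hp|_].
  exfalso. apply (Hc f); [rewrite funs_Fun; left; auto | exact Hp].
  f_equal. rewrite map_map. apply map_ext_in. intros c Hin.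
  rewrite Forall_forall in H. apply H; auto. intros g Hg. apply Hc.
  rewrite funs_Fun. right. apply in_flat_map. eauto.
Qed.
End Kappa.

Lemma mgu_constr F V (P : F -> Prop) (si ti : term F V) th :
  (forall f, In f (funs si) -> ~ P f) -> (forall f, In f (funs ti) -> ~ P f) ->
  mgu th si ti -> forall x f, In f (funs (th x)) -> ~ P f.
Proof.
  intros Hs Ht [Hu Hm] x f Hf.
  set (sg := fun z => kappa P x (th z)).
  assert (Hsg : unifier sg si ti).
  { unfold unifier, sg. rewrite <- !kappa_apply; auto. rewrite Hu. auto. }
  destruct (Hm _ Hsg) as [d Hd]. specialize (Hd x). unfold sg in Hd.
  apply (kappa_funs P x (th x)). rewrite Hd. apply funs_apply. auto.
Qed.

Section Lists.
Variable A : Type.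
Definition del (i : nat) (c : list A) := firstn i c ++ skipn (S i) c.

Lemma in_del i c z : In z (del i c) -> In z c.
Proof.
  unfold del. revert c. induction i; intros [|a c]; simpl; auto.
  intros [->|H]; auto.
Qed.

Lemma del_in i c m z : nth_error c m = Some z -> m <> i -> In z (del i c).
Proof.
  unfold del. revert c m. induction i; intros [|a c] [|m]; simpl; intros H Hm; try discriminate; try congruence.
  - apply nth_error_In in H; auto.
  - injection H as ->. left; auto.
  - right. apply (IHi c m); auto.
Qed.

Lemma nth_del i c m : i < length c ->
  nth_error (del i c) m = if m <? i then nth_error c m else nth_error c (S m).
Proof.
  unfold del. revert c m. induction i; intros [|a c] [|m]; simpl; intros H; try lia; auto.
  rewrite IHi by lia. destruct m; simpl; auto.
Qed.

Lemma flat_firstn (B : Type) (g : A -> list B) k c z :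
  In z (flat_map g (firstn k c)) <-> exists m e, m < k /\ nth_error c m = Some e /\ In z (g e).
Proof.
  rewrite in_flat_map. split.
  - intros [e [He Hz]]. destruct (In_nth_error _ _ He) as [m Hm].
    rewrite nth_error_firstn in Hm. destruct (Nat.ltb_spec m k); try discriminate. eauto.
  - intros [m [e [Hm [He Hz]]]]. exists e. split; auto.
    apply nth_error_In with m. rewrite nth_error_firstn. destruct (Nat.ltb_spec m k); auto; lia.
Qed.

Lemma filter_ex (l : list A) (rho : A) : exists l2, forall r, In r l2 <-> In r l /\ r <> rho.
Proof.
  induction l as [|a l [l2 IH]]. exists []; simpl; tauto.
  destruct (classic (a = rho)) as [->|Hn].
  - exists l2. intros r. rewrite IH. simpl. intuition congruence.
  - exists (a :: l2). intros r. simpl. rewrite IH. intuition congruence.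
Qed.
End Lists.

Section Main.
Variables F V : Type.
Notation term := (term F V).
Variable R : trs F V.
Variable rho : rule F V.
Variable i : nat.
Variables si ti : term.
Variable th : subst F V.
Hypothesis Hi : nth_error (conds rho) i = Some (si, ti).
Hypothesis Hsi : constructor_term R si.
Hypothesis Hti : constructor_term R ti.
Hypothesis Hmgu : mgu th si ti.
Hypothesis Hrho : R rho.

Definition rho' := inst_rule_del th rho i.
Definition R' : trs F V := fun r => (R r /\ r <> rho) \/ r = rho'.

Lemma step_fw S X : is_fix S X -> (forall r, S r -> ~ is_var (lhs r)) ->
  (forall f, defined S f -> defined R f) ->
  forall s t, innermost_step R X s t -> innermost_step R' X s t.
Proof.
  intros Hfix Hnv Hdef s t [Hg [p [r [sg [HS [Hsg [Hp [Hq [Hc Hrep]]]]]]]]].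
  split; auto.
  destruct (classic (r = rho)) as [->|Hne].
  2:{ exists p, r, sg. split. left; auto. repeat split; auto; apply Hsg. }
  assert (Hirr : ~ reducible X (apply sg si)).
  { apply irred_constr with S; auto. intros f Hf HdS. eapply Hsi; eauto. }
  assert (Heq : apply sg si = apply sg ti).
  { apply rt_irred with X; auto. apply Hc. apply nth_error_In with i; auto. }
  destruct Hmgu as [_ Hm]. destruct (Hm sg Heq) as [d Hd].
  set (d' := fun y => if excluded_middle_informative (exists x, In y (vars (th x))) then d y else sg y).
  assert (Hd'x : forall x, sg x = apply d' (th x)).
  { intros x. rewrite Hd. apply apply_ext. intros y Hy. unfold d'.
    destruct (excluded_middle_informative _) as [_|Hn]; auto. exfalso; eauto. }
  assert (Hcomp : forall u, apply sg u = apply d' (apply th u)).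
  { intros u. rewrite apply_comp. apply apply_ext. intros; auto. }
  assert (Hd' : forall y, ground (d' y) /\ ~ reducible X (d' y)).
  { intros y. unfold d'. destruct (excluded_middle_informative _) as [[x Hy]|_]; [|apply Hsg].
    destruct (Hsg x) as [Hgx Hrx]. rewrite Hd in Hgx, Hrx. split.
    - apply ground_apply_inv with (th x); auto.
    - intros Hr. apply Hrx. destruct (var_pos _ _ Hy) as [q Hq'].
      apply red_up with S (d y) q; auto. apply (subterm_apply d _ _ Hq'). }
  exists p, rho', d'. unfold R', rho', inst_rule_del; simpl. split; [right; auto|]. repeat split.
  - apply Hd'.
  - apply Hd'.
  - rewrite <- Hcomp. auto.
  - intros q u Hq0. rewrite <- Hcomp. apply Hq; auto.
  - intros a' b' Hin. apply in_map_iff in Hin as [[a b] [He Hin]].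
    injection He as <- <-. rewrite <- !Hcomp. apply Hc. apply in_del with i; auto.
  - rewrite <- Hcomp. auto.
Qed.

Lemma step_bw S X : is_fix S X -> (forall r, S r -> ~ is_var (lhs r)) ->
  (forall f, defined S f -> defined R f) ->
  forall s t, innermost_step R' X s t -> innermost_step R X s t.
Proof.
  intros Hfix Hnv Hdef s t [Hg [p [r [d [HS [Hd [Hp [Hq [Hc Hrep]]]]]]]]].
  split; auto.
  destruct HS as [[HS _] | ->].
  { exists p, r, d. repeat split; auto; apply Hd. }
  set (sg := fun x => apply d (th x)).
  assert (Hcomp : forall u, apply d (apply th u) = apply sg u).
  { intros u. rewrite apply_comp. auto. }
  unfold rho', inst_rule_del in *; simpl in *. rewrite Hcomp in *.
  exists p, rho, sg. repeat split.
  - exact Hrho.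
  - apply ground_apply. apply Hd.
  - apply irred_constr with S; auto.
    intros f Hf HdS. apply (mgu_constr (defined R) Hsi Hti Hmgu x f Hf). auto.
  - auto.
  - auto.
  - intros a b Hin. destruct (In_nth_error _ _ Hin) as [m Hm].
    destruct (Nat.eq_dec m i) as [->|Hmi].
    + rewrite Hi in Hm. injection Hm as <- <-. destruct Hmgu as [Hu _].
      rewrite <- !Hcomp. unfold unifier in Hu. rewrite Hu. apply rt_refl.
    + rewrite <- !Hcomp. apply (Hc (apply th a) (apply th b)).
      apply in_map_iff. exists (a, b). split; auto. apply del_in with m; auto.
  - auto.
Qed.

Hypothesis HR : dctrs R.

Definition thp (st : term * term) := (apply th (fst st), apply th (snd st)).

Lemma conds_rho' : conds rho' = map thp (del i (conds rho)).
Proof. reflexivity. Qed.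

Lemma lhs_rho' : lhs rho' = apply th (lhs rho).
Proof. reflexivity. Qed.

Lemma Hlen : i < length (conds rho).
Proof. apply nth_error_Some. rewrite Hi. discriminate. Qed.

Lemma nth_c' m : nth_error (conds rho') m =
  option_map thp (if m <? i then nth_error (conds rho) m else nth_error (conds rho) (S m)).
Proof. rewrite conds_rho', nth_error_map, nth_del; auto. apply Hlen. Qed.

Definition Good k x := In x (vars (apply th (lhs rho))) \/
  exists m e, m < k /\ nth_error (conds rho') m = Some e /\ In x (vars (snd e)).

Lemma Good_mono k k' x : k <= k' -> Good k x -> Good k' x.
Proof.
  intros Hk [H|[m [e [Hm H]]]]. left; auto. right. exists m, e. split; auto. lia.
Qed.

Lemma Good_goal k x : Good k x ->
  In x (vars (lhs rho') ++ flat_map (fun st => vars (snd st)) (firstn k (conds rho'))).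
Proof.
  intros [H|H]; apply in_app_iff. left; auto. right. apply flat_firstn. auto.
Qed.

Lemma Good_cv k x : Good k x -> In x (vars (lhs rho') ++ cond_vars (conds rho')).
Proof.
  intros [H|[m [e [Hm [He H]]]]]; apply in_app_iff. left; auto. right.
  unfold cond_vars. apply in_flat_map. exists e. split. apply nth_error_In with m; auto.
  apply in_app_iff; auto.
Qed.

Lemma K k z x : k <= i ->
  In z (vars (lhs rho) ++ flat_map (fun st => vars (snd st)) (firstn k (conds rho))) ->
  In x (vars (th z)) -> Good k x.
Proof.
  intros Hk Hz Hx. apply in_app_or in Hz as [Hz|Hz].
  - left. apply vars_apply. eauto.
  - apply flat_firstn in Hz as [m [e [Hm [He Hz]]]]. right. exists m, (thp e).
    split; auto. rewrite nth_c'. destruct (Nat.ltb_spec m i); try lia. rewrite He.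
    split; auto. simpl. apply vars_apply. eauto.
Qed.

Lemma Hdr : dctrs_rule rho.
Proof. destruct HR as [_ H]. auto. Qed.

Lemma Gsi x : In x (vars (apply th si)) -> Good i x.
Proof.
  intros Hx. apply vars_apply in Hx as [z [Hz Hx]].
  destruct Hdr as [_ [_ Hc]]. apply K with (z:=z); auto. apply (Hc i si ti Hi z Hz).
Qed.

Lemma Gti x : In x (vars (apply th ti)) -> Good i x.
Proof. destruct Hmgu as [Hu _]. unfold unifier in Hu. rewrite <- Hu. apply Gsi. Qed.

Lemma K2 k z x : i < k ->
  In z (vars (lhs rho) ++ flat_map (fun st => vars (snd st)) (firstn k (conds rho))) ->
  In x (vars (th z)) -> Good (k - 1) x.
Proof.
  intros Hk Hz Hx. apply in_app_or in Hz as [Hz|Hz].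
  - left. apply vars_apply. eauto.
  - apply flat_firstn in Hz as [m [e [Hm [He Hz]]]].
    destruct (lt_eq_lt_dec m i) as [[Hmi| ->]|Hmi].
    + right. exists m, (thp e). split; [lia|]. rewrite nth_c'. destruct (Nat.ltb_spec m i); try lia.
      rewrite He. split; auto. simpl. apply vars_apply. eauto.
    + rewrite Hi in He. injection He as <-. apply Good_mono with i; [lia|].
      apply Gti. apply vars_apply. eauto.
    + right. exists (m - 1), (thp e). split; [lia|]. rewrite nth_c'.
      destruct (Nat.ltb_spec (m - 1) i); try lia. replace (S (m - 1)) with m by lia.
      rewrite He. split; auto. simpl. apply vars_apply. eauto.
Qed.

Lemma dctrs_rho' : dctrs_rule rho'.
Proof.
  destruct Hdr as [Hnv [Hr Hc]]. split; [|split].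
  - rewrite lhs_rho'. destruct (lhs rho) as [y|f ts] eqn:E.
    + exfalso. apply Hnv. exists y; auto.
    + simpl. intros [y H]. discriminate.
  - intros x Hx. unfold rho', inst_rule_del in Hx. simpl in Hx.
    apply vars_apply in Hx as [y [Hy Hx]]. apply Hr in Hy. apply in_app_or in Hy as [Hy|Hy].
    + apply in_app_iff. left. rewrite lhs_rho'. apply vars_apply. eauto.
    + unfold cond_vars in Hy. apply in_flat_map in Hy as [e [He Hy]].
      destruct (In_nth_error _ _ He) as [m Hm].
      destruct (Nat.eq_dec m i) as [->|Hmi].
      * rewrite Hi in Hm. injection Hm as <-. simpl in Hy.
        apply (Good_cv (k := i)). apply in_app_or in Hy as [Hy|Hy].
        -- apply Gsi. apply vars_apply. eauto.
        -- apply Gti. apply vars_apply. eauto.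
      * apply in_app_iff. right. unfold cond_vars. apply in_flat_map. exists (thp e).
        split. rewrite conds_rho'. apply in_map. apply del_in with m; auto.
        simpl. apply in_app_or in Hy as [Hy|Hy]; apply in_app_iff; [left|right];
        apply vars_apply; eauto.
  - intros j s' t' Hj x Hx. rewrite nth_c' in Hj. apply Good_goal.
    destruct (Nat.ltb_spec j i).
    + destruct (nth_error (conds rho) j) as [[a b]|] eqn:E; try discriminate.
      simpl in Hj. injection Hj as <- <-. apply vars_apply in Hx as [z [Hz Hx]].
      apply K with (z:=z); auto. lia. apply (Hc j a b E z Hz).
    + destruct (nth_error (conds rho) (S j)) as [[a b]|] eqn:E; try discriminate.
      simpl in Hj. injection Hj as <- <-. apply vars_apply in Hx as [z [Hz Hx]].
      replace j with (S j - 1) by lia.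
      apply K2 with (z:=z); auto. lia. apply (Hc (S j) a b E z Hz).
Qed.

Lemma dctrs_R' : dctrs R'.
Proof.
  destruct HR as [[l Hl] Hall]. split.
  - destruct (filter_ex l rho) as [l2 H2]. exists (rho' :: l2). intros r.
    unfold R'. simpl. rewrite H2, Hl. intuition.
  - intros r [[Hr _]| ->]. auto. apply dctrs_rho'.
Qed.

Lemma def_R' f : defined R' f -> defined R f.
Proof.
  intros [r [ts [[[Hr _]| ->] Hl]]]. exists r, ts; auto.
  rewrite lhs_rho' in Hl. destruct Hdr as [Hnv _].
  destruct (lhs rho) as [y|g us] eqn:E. exfalso. apply Hnv. exists y; auto.
  simpl in Hl. injection Hl as -> _. exists rho, us. auto.
Qed.

Lemma nv (S : trs F V) : dctrs S -> forall r, S r -> ~ is_var (lhs r).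
Proof. intros [_ H] r Hr. apply H; auto. Qed.

Lemma fix_R_R' X : is_fix R X -> is_fix R' X.
Proof.
  unfold is_fix. intros H s t. pose proof H as H0. unfold is_fix in H0. rewrite H0. split.
  apply (step_fw (S := R)); auto. apply nv; auto.
  apply (step_bw (S := R)); auto. apply nv; auto.
Qed.

Lemma fix_R'_R X : is_fix R' X -> is_fix R X.
Proof.
  unfold is_fix. intros H s t. pose proof H as H0. unfold is_fix in H0. rewrite H0. split.
  apply (step_bw (S := R')); auto. apply nv; apply dctrs_R'. apply def_R'.
  apply (step_fw (S := R')); auto. apply nv; apply dctrs_R'. apply def_R'.
Qed.

End Main.

Theorem mainTheorem14 (F V : Type) (R : trs F V) (rho : rule F V) (i : nat)
    (si ti : term F V) (th : subst F V) :
  dctrs R -> R rho ->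
  nth_error (conds rho) i = Some (si, ti) ->
  constructor_term R si -> constructor_term R ti ->
  mgu th si ti ->
  let R' : trs F V := fun r => (R r /\ r <> rho) \/ r = inst_rule_del th rho i in
  dctrs R' /\
  forall (X X' : relation (term F V)),
    innermost_rel R X -> innermost_rel R' X' ->
    forall s t : term F V, ground s -> ground t ->
      (clos_refl_trans (term F V) X s t <-> clos_refl_trans (term F V) X' s t).
Proof.
  intros HR Hrho Hi Hsi Hti Hmgu R'0.
  change R'0 with (R' R rho i th).
  split.
  - eapply dctrs_R'; eauto.
  - intros X X' [HX HXm] [HX' HX'm] s t _ _.
    assert (Heq : forall a b, X a b <-> X' a b).
    { intros a b. split.
      - apply HXm. eapply fix_R'_R; eauto.
      - apply HX'm. eapply fix_R_R'; eauto. }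
    split; intros H; induction H.
    + apply rt_step. apply Heq; auto.
    + apply rt_refl.
    + eapply rt_trans; eauto.
    + apply rt_step. apply Heq; auto.
    + apply rt_refl.
    + eapply rt_trans; eauto.
Qed.
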